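(* Let $H_p>0$ and let $\gamma_g:\mathbb{R}\to\mathbb{R}$ be an even, $H_p$-periodic, strictly positive function that is integrable over a period. Let $n$ be an even integer. Consider the array of $n+1$ junctions indexed by $i\in\{-n/2,\dots,n/2\}$, with positions $a_i = 2\pi i/H_p$ and strengths $$d_{-i}=d_i=\frac{1}{H_p}\int_0^{H_p}\gamma_g(H)\cos(Ha_i)\,dH,\qquad i\in\{0,\dots,n/2\}.$$ Then the maximal current of this array in the magnetic approximation is $$\gamma_{max}(H)=\Big|d_0+2\sum_{i=1}^{n/2} d_i\cos(Ha_i)\Big|\qquad\text{for all } H\in\mathbb{R},$$ i.e. the absolute value of the truncation (keeping the harmonics $\cos(2\pi iH/H_p)$, $0\le i\le n/2$) of the cosine Fourier series of $\gamma_g$.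
   Context: An array of Josephson junctions (in the magnetic approximation) is described by finitely many real positions $a_1<\dots<a_m$ and real strengths $d_1,\dots,d_m$ (a negative $d_i$ corresponds to a so-called $\pi$-junction). For an applied magnetic field $H\in\mathbb{R}$, the maximal current of the array in the magnetic approximation is $$\gamma_{max}(H)=\max_{c\in\mathbb{R}}\Big|\sum_{i=1}^m d_i\sin(Ha_i+c)\Big|,$$ and $c_{max}(H)$ denotes a value of $c$ at which this maximum is attained. *)

(* Defs.v *)
From HB Require Import structures.
From mathcomp Require Import all_boot all_order all_algebra.
From mathcomp Require Import all_classical all_reals all_analysis.
Set Implicit Arguments. Unset Strict Implicit. Unset Printing Implicit Defensive.
Import Order.TTheory GRing.Theory Num.Theory.
Local Open Scope ring_scope.
Local Open Scope classical_set_scope.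

Definition array_sum {R : realType} (m : nat) (a d : 'I_m -> R) (H c : R) : R :=
  \sum_(i < m) d i * sin (H * a i + c).

Definition is_gamma_max {R : realType} (m : nat) (a d : 'I_m -> R) (H v : R) : Prop :=
  (forall c : R, `|array_sum a d H c| <= v) /\
  (exists c : R, `|array_sum a d H c| = v).

Definition jpos {R : realType} (Hp : R) (i : int) : R := 2 * pi * i%:~R / Hp.

Definition jcoef {R : realType} (Hp : R) (gg : R -> R) (k : nat) : R :=
  Hp^-1 * Rintegral (@lebesgue_measure R) `[0, Hp]
            (fun H => gg H * cos (H * jpos Hp k%:Z)).

(* The array of n+1 junctions: the j-th junction (j : 'I_(n+1)) has index
   i = j - n/2 in {-n/2,..,n/2}; position a_i and strength d_{|i|} (d_{-i} = d_i). *)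
Definition junc_index (n : nat) (j : 'I_(n.+1)) : int := (nat_of_ord j)%:Z - (n./2)%:Z.

Definition array_pos {R : realType} (Hp : R) (n : nat) (j : 'I_(n.+1)) : R :=
  jpos Hp (junc_index j).

Definition array_str {R : realType} (Hp : R) (gg : R -> R) (n : nat) (j : 'I_(n.+1)) : R :=
  jcoef Hp gg `|junc_index j|%N.

(* Main.v *)
Require Import Defs.
From HB Require Import structures.
From mathcomp Require Import all_boot all_order all_algebra.
From mathcomp Require Import all_classical all_reals all_analysis.
From mathcomp Require Import zify ring lra.
Import Order.TTheory GRing.Theory Num.Theory.
Local Open Scope ring_scope.
Local Open Scope classical_set_scope.

Lemma sum_sym (R : realType) (F : int -> R) (k : nat) :
  \sum_(0 <= j < (k.*2).+1) F (j%:Z - k%:Z) = F 0 + \sum_(1 <= i < k.+1) (F i%:Z + F (- i%:Z)).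
Proof.
elim: k => [|k IH].
  by rewrite big_nat1 big_geq // !addr0.
have -> : ((k.+1).*2.+1 = (k.*2).+3)%N by rewrite doubleS.
rewrite big_nat_recl // big_nat_recr //= [in RHS]big_nat_recr //=.
have e1 : forall i : nat, (i.+1%:Z - k.+1%:Z = i%:Z - k%:Z) by move=> i; lia.
have e2 : ((k.*2).+2%:Z - k.+1%:Z = k.+1%:Z) by lia.
have e3 : (0%:Z - k.+1%:Z = - k.+1%:Z) by lia.
under eq_bigr do rewrite e1.
rewrite IH e2 e3; ring.
Qed.

Theorem mainTheorem1 (R : realType) (Hp : R) (gg : R -> R) (n : nat) :
  0 < Hp ->
  (forall H : R, gg (- H) = gg H) ->
  (forall H : R, gg (H + Hp) = gg H) ->
  (forall H : R, 0 < gg H) ->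
  (@lebesgue_measure R).-integrable `[0, Hp] (EFin \o gg) ->
  ~~ odd n ->
  forall H : R,
    is_gamma_max (array_pos Hp (n:=n)) (array_str Hp gg (n:=n)) H
      `| jcoef Hp gg 0 +
         2 * \sum_(1 <= i < (n./2).+1) jcoef Hp gg i * cos (H * jpos Hp i%:Z) |.
Proof.
move=> _ _ _ _ _ hodd H.
set S := (X in `|X|).
have hn : n = ((n./2).*2)%N.
  by have := odd_double_half n; rewrite (negbTE hodd) add0n.
have key : forall c, array_sum (array_pos Hp (n:=n)) (array_str Hp gg (n:=n)) H c = sin c * S.
  move=> c.
  pose F (i : int) := jcoef Hp gg `|i|%N * sin (H * jpos Hp i + c).
  transitivity (\sum_(j < n.+1) F (j%:Z - (n./2)%:Z)); first by apply: eq_bigr.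
  rewrite -(big_mkord xpredT (fun j => F (j%:Z - (n./2)%:Z))).
  rewrite /S; clear S; move: (n./2) hn => k hn; subst n.
  rewrite sum_sym.
  have hF : forall i : nat, F i%:Z + F (- i%:Z) = sin c * (2 * (jcoef Hp gg i * cos (H * jpos Hp i%:Z))).
    move=> i; rewrite /F abszN.
    have jN : jpos Hp (- i%:Z) = - jpos Hp i%:Z by rewrite /jpos rmorphN /= !mulrN mulNr.
    rewrite jN mulrN !sinD sinN cosN absz_nat; ring.
  under eq_bigr do rewrite hF.
  rewrite [2 * _]mulr_sumr mulrDr mulr_sumr /F.
  have j0 : jpos Hp 0 = 0 by rewrite /jpos mulr0 mul0r.
  rewrite j0 mulr0 add0r; ring.
split.
  move=> c; rewrite key normrM.
  by rewrite -[leRHS]mul1r ler_wpM2r // sin_max.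
exists (pi / 2); by rewrite key sin_pihalf mul1r.
Qed.
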